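(* Let $\Omega=[0,1]^d$ and let $f^s,f^t:\Omega\to\mathbb{R}$ (source and target objective functions, to be minimized) be Lipschitz continuous with a common constant $K^*>0$ with respect to the Chebyshev distance. For $\epsilon>0$, let $B^1,\dots,B^{N_B}$ be a partition of $\Omega$ into neighborhoods, each contained in the closed Chebyshev ball of radius $\epsilon/K^*$ around its center $\boldsymbol{x}_c^i$, and let $f^s_\epsilon(\boldsymbol{x})=\sum_i\mathbf{1}_{B^i}(\boldsymbol{x})f^s(\boldsymbol{x}_c^i)$ and $f^t_\epsilon(\boldsymbol{x})=\sum_i\mathbf{1}_{B^i}(\boldsymbol{x})f^t(\boldsymbol{x}_c^i)$. Suppose that for every $\epsilon>0$ the Spearman rank correlation between $(f^s(\boldsymbol{x}_c^i))_{i}$ and $(f^t(\boldsymbol{x}_c^i))_{i}$ equals $1$. Then transferring a globally converged source solution makes the target converge to its global optimum immediately: for every $\epsilon>0$, if $\boldsymbol{x}^s_{\min}$ is a minimizer of $f^s_\epsilon$ (the best source solution found by a globally convergent surrogate-assisted search on $f^s_\epsilon$) and $\boldsymbol{x}^t_*$ is a global minimizer of $f^t$, then $|f^t(\boldsymbol{x}^t_* )-f^t(\boldsymbol{x}^s_{\min})|\le 4\epsilon$; in particular, for every $\xi>0$, choosing $\epsilon\le\xi/4$ gives $|f^t(\boldsymbol{x}^t_* )-f^t(\boldsymbol{x}^s_{\min})|\le\xi$.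
   Context: The Spearman rank correlation of two vectors is the Pearson correlation of their rank vectors; a value of $1$ means the rankings coincide. $f_\epsilon$ as defined is an $\epsilon$-optimal approximation, i.e. $|f-f_\epsilon|\le\epsilon$ on $\Omega$. *)

(* Defs.v *)
From HB Require Import structures.
From mathcomp Require Import all_boot all_order all_algebra.
From mathcomp Require Import classical_sets boolp reals numfun.
Set Implicit Arguments. Unset Strict Implicit. Unset Printing Implicit Defensive.
Import Order.TTheory GRing.Theory Num.Theory.
Local Open Scope classical_set_scope.
Local Open Scope ring_scope.

Section Defs.
Variable R : realType.

Definition cube (d : nat) : set 'rV[R]_d :=
  [set x | forall i : 'I_d, 0 <= x ord0 i <= 1].
Arguments cube d : clear implicits.

Definition cheb_dist (d : nat) (x y : 'rV[R]_d) : R :=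
  \big[Num.max/0]_(i < d) `|x ord0 i - y ord0 i|.

Definition cheb_lipschitz (d : nat) (K : R) (f : 'rV[R]_d -> R) : Prop :=
  forall x y, cube d x -> cube d y -> `|f x - f y| <= K * cheb_dist x y.

Definition is_partition (d N : nat) (B : 'I_N -> set 'rV[R]_d) : Prop :=
  [/\ forall i, B i !=set0,
      forall i j, i != j -> B i `&` B j = set0 &
      \bigcup_(i in [set: 'I_N]) B i = cube d].

Definition approx (d N : nat) (B : 'I_N -> set 'rV[R]_d)
  (c : 'I_N -> 'rV[R]_d) (f : 'rV[R]_d -> R) (x : 'rV[R]_d) : R :=
  \sum_(i < N) \1_(B i) x * f (c i).

Definition is_minimizer (d : nat) (f : 'rV[R]_d -> R) (x : 'rV[R]_d) : Prop :=
  cube d x /\ forall y, cube d y -> f x <= f y.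

(* fractional (average) rank of entry i of u, ranks counted from 1 *)
Definition avg_rank (N : nat) (u : 'I_N -> R) (i : 'I_N) : R :=
  #|[set j | u j < u i]|%:R + (#|[set j | u j == u i]|%:R + 1) / 2.

Definition mean (N : nat) (u : 'I_N -> R) : R := (\sum_(i < N) u i) / N%:R.

Definition pearson (N : nat) (u v : 'I_N -> R) : R :=
  (\sum_(i < N) (u i - mean u) * (v i - mean v)) /
  (Num.sqrt (\sum_(i < N) (u i - mean u) ^+ 2) *
   Num.sqrt (\sum_(i < N) (v i - mean v) ^+ 2)).

Definition spearman (N : nat) (u v : 'I_N -> R) : R :=
  pearson (avg_rank u) (avg_rank v).

End Defs.
Arguments cube {R} d.

(* Main.v *)
Require Import Defs.
From HB Require Import structures.
From mathcomp Require Import all_boot all_order all_algebra.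
From mathcomp Require Import classical_sets boolp reals numfun.
From mathcomp Require Import ring lra.
Import Order.TTheory GRing.Theory Num.Theory.
Local Open Scope classical_set_scope.
Local Open Scope ring_scope.

Lemma pearson1_mono (R : realType) (N : nat) (u v : 'I_N -> R) :
  pearson u v = 1 -> forall m k, v m < v k -> u m < u k.
Proof.
rewrite /pearson.
set x := fun i => u i - mean u.
set y := fun i => v i - mean v.
set S := \sum_(i < N) _.
set Sxx := \sum_(i < N) _.
set Syy := \sum_(i < N) _.
move=> h m k hvk.
have hxx : 0 <= Sxx by apply: sumr_ge0 => i _; apply: sqr_ge0.
have hyy : 0 <= Syy by apply: sumr_ge0 => i _; apply: sqr_ge0.
have hD : Num.sqrt Sxx * Num.sqrt Syy != 0.
  apply/negP => /eqP h0; move: h; rewrite h0 invr0 mulr0 => /eqP.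
  by rewrite eq_sym oner_eq0.
have hS : S = Num.sqrt Sxx * Num.sqrt Syy.
  by rewrite -(divfK hD S) h mul1r.
have sx0 : 0 < Num.sqrt Sxx.
  rewrite lt_def sqrtr_ge0 andbT; apply/negP => /eqP h0.
  by move: hD; rewrite h0 mul0r eqxx.
have sy0 : 0 < Num.sqrt Syy.
  rewrite lt_def sqrtr_ge0 andbT; apply/negP => /eqP h0.
  by move: hD; rewrite h0 mulr0 eqxx.
set sx := Num.sqrt Sxx in hS sx0 hD.
set sy := Num.sqrt Syy in hS sy0 hD.
have hsum : \sum_(i < N) (sy * x i - sx * y i) ^+ 2 = 0.
  have -> : \sum_(i < N) (sy * x i - sx * y i) ^+ 2 =
     \sum_(i < N) (sy ^+ 2 * (x i) ^+ 2) + \sum_(i < N) (sx ^+2 * (y i) ^+ 2)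
     - \sum_(i < N) (2 * sx * sy * (x i * y i)).
    rewrite -big_split -sumrB /=; apply: eq_bigr => i _; ring.
  rewrite -!mulr_sumr /sx /sy !sqr_sqrtr // -/Sxx -/Syy -/S hS.
  rewrite -/sx -/sy.
  have -> : Sxx = sx ^+ 2 by rewrite /sx sqr_sqrtr.
  have -> : Syy = sy ^+ 2 by rewrite /sy sqr_sqrtr.
  ring.
have heq : forall i, sy * x i = sx * y i.
  move=> i; apply/eqP; rewrite -subr_eq0 -sqrf_eq0; apply/eqP.
  by apply: (psumr_eq0P _ hsum) => // j _; apply: sqr_ge0.
have hy : y m < y k by rewrite /y ltrD2r.
have : sy * x m < sy * x k by rewrite !heq ltr_pM2l.
rewrite ltr_pM2l // /x ltrD2r //.
Qed.

Lemma card_cls (N : nat) (P : 'I_N -> bool) :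
  #|[set l | P l]| = #|finset P|.
Proof. by apply: eq_card => l; rewrite unfold_in /in_set /= inE asboolb. Qed.

Lemma avg_rank_lt (R : realType) (N : nat) (u : 'I_N -> R) i j :
  u i < u j -> avg_rank u i < avg_rank u j.
Proof.
move=> hij; rewrite /avg_rank !card_cls.
set Li := #|finset _|.
set Ei := #|finset (fun l => u l == u i)|.
set Lj := #|finset (fun l => u l < u j)|.
set Ej := #|finset (fun l => u l == u j)|.
have hEi : (1 <= Ei)%N by rewrite /Ei (cardsD1 i) inE eqxx.
have hEj : (1 <= Ej)%N by rewrite /Ej (cardsD1 j) inE eqxx.
have hL : (Li + Ei <= Lj)%N.
  rewrite /Li /Ei -cardsUI.
  have -> : finset (fun l => u l < u i) :&: finset (fun l => u l == u i) = finset.set0.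
    apply/setP => l; rewrite !inE; apply/negP => /andP[h1 /eqP h2].
    by rewrite h2 ltxx in h1.
  rewrite cards0 addn0; apply: subset_leq_card; apply/fintype.subsetP => l.
  rewrite !inE => /orP[h1|/eqP h2]; first exact: lt_trans h1 hij.
  by rewrite h2.
have rEi : (1 <= Ei%:R :> R) by rewrite ler1n.
have rEj : (1 <= Ej%:R :> R) by rewrite ler1n.
have rL : (Li%:R + Ei%:R <= Lj%:R :> R) by rewrite -natrD ler_nat.
lra.
Qed.

Arguments pearson1_mono {R N u v}.
Arguments avg_rank_lt {R N u i j}.

Lemma spearman_mono (R : realType) (N : nat) (u v : 'I_N -> R) :
  spearman u v = 1 -> forall m k, u k <= u m -> v k <= v m.
Proof.
move=> h m k hu; rewrite leNgt; apply/negP => hv.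
have := pearson1_mono h _ _ (avg_rank_lt hv).
rewrite le_eqVlt in hu; case/orP: hu => [/eqP e|hu]; first by rewrite /avg_rank e ltxx.
by move/(lt_trans (avg_rank_lt hu)); rewrite ltxx.
Qed.

Arguments spearman_mono {R N u v}.

Theorem mainTheorem4 (R : realType) (d : nat) (K : R) (fs ft : 'rV[R]_d -> R)
  (hK : 0 < K) (hfs : cheb_lipschitz K fs) (hft : cheb_lipschitz K ft)
  (eps : R) (heps : 0 < eps)
  (N : nat) (B : 'I_N -> set 'rV[R]_d) (c : 'I_N -> 'rV[R]_d)
  (hB : is_partition B)
  (hc : forall i, cube d (c i))
  (hball : forall i x, B i x -> cheb_dist x (c i) <= eps / K)
  (hspear : spearman (fun i => fs (c i)) (fun i => ft (c i)) = 1)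
  (xs_min xt_star : 'rV[R]_d)
  (hxs : is_minimizer (approx B c fs) xs_min)
  (hxt : is_minimizer ft xt_star) :
  `|ft xt_star - ft xs_min| <= 4 * eps /\
  (forall xi : R, 0 < xi -> eps <= xi / 4 -> `|ft xt_star - ft xs_min| <= xi).
Proof.
case: hB => hne hdisj hcov.
have incube : forall i x, B i x -> cube d x.
  by move=> i x hx; rewrite -hcov; exists i.
have inblock : forall x, cube d x -> exists i, B i x.
  by move=> x; rewrite -hcov => -[i _ hx]; exists i.
have happ : forall f k x, B k x -> approx B c f x = f (c k).
  move=> f k x hx; rewrite /approx (bigD1 k) //= big1 ?addr0.
    by rewrite indicE mem_set // mul1r.
  move=> j hjk; rewrite indicE memNset ?mul0r //.
  move=> hj; have := hdisj j k hjk; rewrite -subset0 => /(_ x); apply.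
  by split.
have hclose : forall i x, B i x -> `|ft x - ft (c i)| <= eps.
  move=> i x hx; apply: le_trans (hft _ _ (incube _ _ hx) (hc i)) _.
  apply: le_trans (ler_wpM2l (ltW hK) (hball _ _ hx)) _.
  by rewrite mulrC divfK ?gt_eqF.
case: hxs => cxs hxs; case: hxt => cxt hxt.
have [k hk] := inblock _ cxs.
have [m hm] := inblock _ cxt.
have hmin : fs (c k) <= fs (c m).
  have [y hy] := hne m.
  by have := hxs y (incube _ _ hy); rewrite (happ _ _ _ hk) (happ _ _ _ hy).
have htmin : ft (c k) <= ft (c m) := spearman_mono hspear _ _ hmin.
have h1 := hclose _ _ hk. have h2 := hclose _ _ hm.
have h3 := hxt _ cxs.
have hfin : `|ft xt_star - ft xs_min| <= 2 * eps.
  rewrite ler_norml; move: h1 h2; rewrite !ler_norml => /andP[a1 a2] /andP[b1 b2].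
  apply/andP; split; lra.
split; first lra.
move=> xi _ hxi; lra.
Qed.
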